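(* Let $k\geq2$, let $X$ be a countably based $T_0$-space, let $\theta\geq2$ be a countable ordinal and let $T$ be a countable $k$-tree. Then $\mathbf{\Sigma}^0_\theta(X,T)$ has a principal $\mathbf{\Sigma}^0_\theta(T)$-total representation. If moreover $X$ is zero-dimensional, then $\mathbf{\Sigma}^0_1(X,T)$ has a principal $\mathbf{\Sigma}^0_1(T)$-total representation.
   Context: $\mathcal{N}=\omega^\omega$ is the Baire space. For a space $X$: $\mathbf{\Sigma}^0_1(X)$ the open sets; $\mathbf{\Sigma}^0_2(X)$ the countable unions of sets $U\setminus V$ with $U,V$ open; for $2<\alpha<\omega_1$, $\mathbf{\Sigma}^0_\alpha(X)$ the countable unions of complements of sets in $\bigcup_{\beta<\alpha}\mathbf{\Sigma}^0_\beta(X)$ (with $\mathbf{\Sigma}^0_0(X)=\{\emptyset\}$). A $k$-partition of $X$ is a function $A:X\to k=\{0,\dots,k-1\}$. A countable $k$-forest is a countable poset $(P;\leq)$ without infinite chains in which every upper cone $\{y\mid x\leq y\}$ is a chain, with a labeling $c:P\to k$; a $k$-tree is a $k$-forest with a greatest element. For a $k$-forest $F$, $\mathbf{\Sigma}^0_\theta(X,F)$ is the set of $k$-partitions $A:X\to k$ for which there exist $B_p\in\mathbf{\Sigma}^0_\theta(X)$ ($p\in F$) with $\bigcup_pB_p=X$ and $A^{-1}(i)=\bigcup\{B_p\setminus\bigcup_{q<p}B_q\mid c(p)=i\}$ for each $i<k$; $\mathbf{\Sigma}^0_\theta(T)$ denotes the assignment $X\mapsto\mathbf{\Sigma}^0_\theta(X,T)$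 (over all spaces $X$). A function $\nu:\mathcal{N}\to\mathbf{\Sigma}^0_\theta(X,T)$ is a $\mathbf{\Sigma}^0_\theta(T)$-total representation if the $k$-partition $(a,x)\mapsto\nu(a)(x)$ of $\mathcal{N}\times X$ belongs to $\mathbf{\Sigma}^0_\theta(\mathcal{N}\times X,T)$; it is principal if for every $\mathbf{\Sigma}^0_\theta(T)$-total representation $\mu:\mathcal{N}\to\mathbf{\Sigma}^0_\theta(X,T)$ there is a continuous $g:\mathcal{N}\to\mathcal{N}$ with $\mu=\nu\circ g$. *)

(* Defs.v *)
From HB Require Import structures.
From mathcomp Require Import all_boot all_order all_algebra.
From mathcomp Require Import all_classical all_reals all_analysis.
Set Implicit Arguments.
Unset Strict Implicit.
Unset Printing Implicit Defensive.
Local Open Scope classical_set_scope.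

(* Every Brouwer tree denotes a countable ordinal (bzero = 0, bsucc a = a+1,
   blim f = sup_n f n) and every countable ordinal is so denoted. *)
Inductive bord : Type :=
| bzero : bord
| bsucc : bord -> bord
| blim : (nat -> bord) -> bord.

(* The ordinal order on Brouwer trees (Kraus--Nordvall Forsberg--Xu):
   ble a b  iff  |a| <= |b|. *)
Inductive ble : bord -> bord -> Prop :=
| ble_zero b : ble bzero b
| ble_trans a b c : ble a b -> ble b c -> ble a c
| ble_succ a b : ble a b -> ble (bsucc a) (bsucc b)
| ble_cocone a f n : ble a (f n) -> ble a (blim f)
| ble_limiting f b : (forall n, ble (f n) b) -> ble (blim f) b.

Definition blt (a b : bord) : Prop := ble (bsucc a) b.
Definition beq (a b : bord) : Prop := ble a b /\ ble b a.

Definition bone : bord := bsucc bzero.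
Definition btwo : bord := bsucc bone.

Inductive Sigma0 (X : topologicalType) : bord -> set X -> Prop :=
| Sigma0_zero a : beq a bzero -> Sigma0 a set0
| Sigma0_one a (A : set X) : beq a bone -> open A -> Sigma0 a A
| Sigma0_two a (A : set X) (U V : nat -> set X) :
    beq a btwo -> (forall n, open (U n)) -> (forall n, open (V n)) ->
    A = \bigcup_n (U n `\` V n) -> Sigma0 a A
| Sigma0_high a (A : set X) (b : nat -> bord) (B : nat -> set X) :
    blt btwo a -> (forall n, blt (b n) a) -> (forall n, Sigma0 (b n) (B n)) ->
    A = \bigcup_n (~` B n) -> Sigma0 a A.

Record kforest (k : nat) := KForest {
  fnode : Type;
  fle : fnode -> fnode -> Prop;
  flabel : fnode -> 'I_k;
  fnode_countable : exists f : fnode -> nat, injective f;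
  fle_refl : forall x, fle x x;
  fle_antisym : forall x y, fle x y -> fle y x -> x = y;
  fle_trans : forall x y z, fle x y -> fle y z -> fle x z;
  fle_chains_finite : forall C : set fnode,
      (forall x y, C x -> C y -> fle x y \/ fle y x) -> finite_set C;
  fle_cones_chains : forall x y z, fle x y -> fle x z -> fle y z \/ fle z y
}.

Definition flt k (F : kforest k) (p q : fnode F) : Prop := fle p q /\ p <> q.

Definition is_ktree k (F : kforest k) : Prop :=
  exists r : fnode F, forall x, fle x r.

Definition SigmaPart k (X : topologicalType) (theta : bord) (F : kforest k)
    (A : X -> 'I_k) : Prop :=
  exists B : fnode F -> set X,
    [/\ forall p, Sigma0 theta (B p),
        \bigcup_p B p = [set: X] &
        forall i : 'I_k, A @^-1` [set i] =
          \bigcup_(p in [set p | flabel p = i])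
             (B p `\` \bigcup_(q in [set q | flt q p]) B q)].

Definition baire : topologicalType := {ptws nat -> nat}.

Definition total_rep k (X : topologicalType) (theta : bord) (F : kforest k)
    (nu : baire -> X -> 'I_k) : Prop :=
  (forall a, SigmaPart theta F (nu a)) /\
  SigmaPart (X := (baire * X)%type) theta F (fun z => nu z.1 z.2).

Definition principal_rep k (X : topologicalType) (theta : bord) (F : kforest k)
    (nu : baire -> X -> 'I_k) : Prop :=
  total_rep theta F nu /\
  forall mu : baire -> X -> 'I_k, total_rep theta F mu ->
    exists g : baire -> baire, continuous g /\ mu = nu \o g.

Definition zero_dim (X : topologicalType) : Prop :=
  exists B : set (set X), basis B /\ B `<=` clopen.

(* Main.v *)
Require Import Defs.
From mathcomp Require Import all_boot all_order all_algebra.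
From mathcomp Require Import all_classical all_reals all_analysis.
From Stdlib Require Cantor.
Local Open Scope classical_set_scope.
Set Implicit Arguments.
Unset Strict Implicit.

Fixpoint le' (a : bord) : bord -> Prop :=
  match a with
  | bzero => fun _ => True
  | bsucc a0 => fix ltA b := match b with
                  | bzero => False
                  | bsucc b0 => le' a0 b0
                  | blim g => exists n, ltA (g n) end
  | blim f => fun b => forall n, le' (f n) b
  end.

Definition lt' a b := le' (bsucc a) b.

Lemma lt'_zero a : ~ lt' a bzero. Proof. by []. Qed.
Lemma lt'_succ a b : lt' a (bsucc b) = le' a b. Proof. by []. Qed.
Lemma lt'_lim a g : lt' a (blim g) = exists n, lt' a (g n). Proof. by []. Qed.
Lemma le'_lim f b : le' (blim f) b = forall n, le' (f n) b. Proof. by []. Qed.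

Lemma le'_cocone a f n : le' a (f n) -> le' a (blim f).
Proof.
elim: a => [//|a0 _|h IH] H.
- by exists n.
- by move=> m; apply: IH; apply: H.
Qed.

Lemma le'_refl a : le' a a.
Proof.
elim: a => [//|a0 IH|f IH] /=; first exact: IH.
by move=> n; apply: (@le'_cocone _ _ n); apply: IH.
Qed.

Lemma le'_trans a b c : le' a b -> le' b c -> le' a c.
Proof.
elim: a b c => [//|a0 IHa|f IH] b c; last first.
  by move=> H1 H2 n; apply: (IH n b) => //; apply: H1.
have M : forall x y c, (forall b c, le' x b -> le' b c -> le' x c) ->
    le' x y -> lt' y c -> lt' x c.
  move=> x y c0 T xy; elim: c0 => [//|c1 _|h IHh].
  - by rewrite !lt'_succ => yc; apply: (T y c1 xy yc).
  - by rewrite !lt'_lim; case=> n Hn; exists n; apply: IHh.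
elim: b c => [//|b0 _|g IHg] c.
- move=> H1 H2; exact: (M a0 b0 c IHa H1 H2).
- case=> n Hn H2; apply: (IHg n) => //; exact: H2.
Qed.

Lemma le'_ble a b : le' a b -> ble a b.
Proof.
elim: a b => [|a0 IH|f IH] b.
- by move=> _; constructor.
- elim: b => [//|b0 _|g IHg] /=.
  + by move=> H; apply: ble_succ; apply: IH.
  + by case=> n Hn; apply: (@ble_cocone _ _ n); apply: IHg.
- by move=> H; apply: ble_limiting => n; apply: IH.
Qed.

Lemma ble_le' a b : ble a b -> le' a b.
Proof.
elim => {a b}.
- by [].
- by move=> a b c _ H1 _ H2; exact: le'_trans H1 H2.
- by move=> a b _ H.
- by move=> a f n _ H; exact: le'_cocone H.
- by move=> f b _ H.
Qed.

Lemma bleE a b : ble a b <-> le' a b.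
Proof. by split; [exact: ble_le'|exact: le'_ble]. Qed.

Lemma bltE a b : blt a b <-> lt' a b.
Proof. exact: bleE. Qed.

Lemma le'_tot a b : (le' b a \/ lt' a b) /\ (le' a b \/ lt' b a).
Proof.
elim: b a => [|b0 IHb|g IHg] a.
- split; first by left.
  elim: a => [|a0 _|f IHf]; first by left.
  + by right.
  + have [H|H] := pselect (forall n, le' (f n) bzero); first by left.
    move/existsNP: H => [n Hn]; right; exists n.
    by case: (IHf n) => // H; case: Hn.
- split; first by have [_ [H|H]] := IHb a; [right|left].
  elim: a => [|a0 _|f IHf]; first by left.
  + by have [_ [H|H]] := IHb a0; [left|right].
  + have [H|H] := pselect (forall n, le' (f n) (bsucc b0)); first by left.
    move/existsNP: H => [n Hn]; right; exists n.
    by case: (IHf n) => // H; case: Hn.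
- split.
  + have [H|H] := pselect (forall n, le' (g n) a); first by left.
    move/existsNP: H => [n Hn]; right; exists n.
    by have [[H|H] _] := IHg n a => //; case: Hn.
  + elim: a => [|a0 _|f IHf]; first by left.
    * have [H|H] := pselect (forall n, le' (g n) a0); first by right.
      move/existsNP: H => [n Hn]; left; exists n.
      by have [[H|H] _] := IHg n a0 => //; case: Hn.
    * have [H|H] := pselect (forall n, le' (f n) (blim g)); first by left.
      move/existsNP: H => [n Hn]; right; exists n.
      by case: (IHf n) => // H; case: Hn.
Qed.

Lemma lt'_acc : forall b, Acc lt' b.
Proof.
suff H : forall t b, lt' b t -> Acc lt' b.
  by move=> b; apply: (H (bsucc b)); apply: le'_refl.
elim => [//|t IH|f IH] b.
- move=> bt; constructor => c cb; apply: IH.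
  exact: le'_trans cb bt.
- by case=> n Hn; apply: (IH n).
Qed.

Lemma lt'_irrefl a : ~ lt' a a.
Proof.
have := lt'_acc a; elim => b _ IH Hb; exact: (IH b Hb Hb).
Qed.

Lemma le'_succ a : le' a (bsucc a).
Proof.
elim: a => [//|a0 IH|f IH].
- exact: IH.
- move=> n; apply: le'_trans (IH n) _.
  change (le' (f n) (blim f)); apply: (@le'_cocone _ _ n); exact: le'_refl.
Qed.

Lemma lt'_le' a b : lt' a b -> le' a b.
Proof. move=> H; exact: le'_trans (le'_succ a) H. Qed.

Definition ord_class (a : bord) :=
  [\/ beq a bzero, beq a bone, beq a btwo | blt btwo a].

Lemma classify a : ord_class a.
Proof.
rewrite /ord_class /beq /blt.
have [[H0|H0] _] := le'_tot bzero a.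
  by apply: Or41; split; apply: le'_ble.
have [[H1|H1] _] := le'_tot bone a.
  by apply: Or42; split; apply: le'_ble.
have [[H2|H2] _] := le'_tot btwo a.
  by apply: Or43; split; apply: le'_ble.
by apply: Or44; apply: le'_ble.
Qed.

Lemma bigcup_pairE T (F : nat -> nat -> set T) :
  \bigcup_n \bigcup_m F n m = \bigcup_k F (Cantor.of_nat k).1 (Cantor.of_nat k).2.
Proof.
apply/seteqP; split => x /=.
- case=> n _ [m _ H]; exists (Cantor.to_nat (n, m)) => //.
  by rewrite Cantor.cancel_of_to.
- by case=> k _ H; exists (Cantor.of_nat k).1 => //; exists (Cantor.of_nat k).2.
Qed.

Lemma beqP a b : beq a b <-> (le' a b /\ le' b a).
Proof. by split=> [[/ble_le' ? /ble_le' ?]|[/le'_ble ? /le'_ble ?]]. Qed.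

Lemma bltP a b : blt a b <-> lt' a b.
Proof. exact: bleE. Qed.

Lemma lt'_le'_trans a b c : lt' a b -> le' b c -> lt' a c.
Proof. exact: le'_trans. Qed.
Lemma le'_lt'_trans a b c : le' a b -> lt' b c -> lt' a c.
Proof. move=> ab bc; apply: le'_trans bc; exact: ab. Qed.

Section Sig.
Context {Y : topologicalType}.
Implicit Types A B : set Y.

Lemma S_beq a b A : Sigma0 a A -> le' a b -> le' b a -> Sigma0 b A.
Proof.
case.
- move=> c /beqP [c0 _] ab ba.
  apply: Sigma0_zero; apply/beqP; split=> //; exact: le'_trans ba c0.
- move=> c A0 /beqP [c1 c1'] oA ab ba.
  apply: Sigma0_one => //; apply/beqP; split; [exact: le'_trans ba c1|exact: le'_trans c1' ab].
- move=> c A0 U V /beqP [c2 c2'] oU oV -> ab ba.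
  apply: (Sigma0_two _ oU oV) => //; apply/beqP; split; [exact: le'_trans ba c2|exact: le'_trans c2' ab].
- move=> c A0 d B /bltP c3 dc SB -> ab ba.
  apply: Sigma0_high SB _ => //.
  + apply/bltP; exact: lt'_le'_trans c3 ab.
  + move=> n; apply/bltP; apply: lt'_le'_trans ab; exact/bltP.
Qed.

Lemma no10 : ~ le' bone bzero. Proof. by []. Qed.
Lemma no20 : ~ le' btwo bzero. Proof. by []. Qed.
Lemma no21 : ~ le' btwo bone. Proof. by []. Qed.

Lemma S_inv0 a A : Sigma0 a A -> le' a bzero -> A = set0.
Proof.
case=> //.
- move=> c A0 /beqP [_ h] _ h'; by case: no10; apply: le'_trans h h'.
- move=> c A0 U V /beqP [_ h] _ _ _ h'; by case: no20; apply: le'_trans h h'.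
- move=> c A0 d B /bltP h _ _ _ h'; have := lt'_le'_trans h h'; by [].
Qed.

Lemma S_inv1 a A : Sigma0 a A -> le' a bone -> le' bone a -> open A.
Proof.
case.
- by move=> *; exact: open0.
- by [].
- move=> c A0 U V /beqP [_ h] _ _ _ h' _; by case: no21; apply: le'_trans h h'.
- move=> c A0 d B /bltP h _ _ _ h'; have := lt'_le'_trans h h'; by [].
Qed.

Lemma S_inv2 a A : Sigma0 a A -> le' a btwo -> le' btwo a ->
  exists U V : nat -> set Y, [/\ forall n, open (U n), forall n, open (V n) &
     A = \bigcup_n (U n `\` V n)].
Proof.
case.
- move=> c /beqP [h _] _ h'; by case: no20; apply: le'_trans h' h.
- move=> c A0 /beqP [h _] _ _ h'; by case: no21; apply: le'_trans h' h.
- by move=> c A0 U V _ oU oV -> _ _; exists U, V.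
- move=> c A0 d B /bltP h _ _ _ h' _; case: (lt'_irrefl (lt'_le'_trans h h')).
Qed.

Lemma S_invH a A : Sigma0 a A -> lt' btwo a ->
  exists (d : nat -> bord) (B : nat -> set Y),
   [/\ forall n, lt' (d n) a, forall n, Sigma0 (d n) (B n) & A = \bigcup_n ~` B n].
Proof.
case.
- move=> c /beqP [h _] h'; by case: no20; apply: le'_trans (lt'_le' h') h.
- move=> c A0 /beqP [h _] _ h'; by case: no21; apply: le'_trans (lt'_le' h') h.
- move=> c A0 U V /beqP [h _] _ _ _ h'; by case: (lt'_irrefl (lt'_le'_trans h' h)).
- move=> c A0 d B _ dc SB -> _; exists d, B; split=> // n; exact/bltP.
Qed.

Lemma setT2 : Sigma0 btwo (@setT Y).
Proof.
apply: (@Sigma0_two _ _ _ (fun=> setT) (fun=> set0)).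
- by apply/beqP; split; exact: le'_refl.
- by move=> _; exact: openT.
- by move=> _; exact: open0.
- by apply/seteqP; split => [x _|x _] //; exists 0%N => //=; split.
Qed.

Lemma S_empty a : Sigma0 a (@set0 Y).
Proof.
case: (classify a) => [/beqP [h h']|/beqP [h h']|/beqP [h h']|/bltP h].
- by apply: Sigma0_zero; apply/beqP.
- by apply: Sigma0_one; [apply/beqP|exact: open0].
- apply: (@Sigma0_two _ _ _ (fun=> set0) (fun=> set0)); first by apply/beqP.
  + by move=> _; exact: open0.
  + by move=> _; exact: open0.
  + by apply/seteqP; split => x //; case=> n _ [].
- apply: (@Sigma0_high _ _ _ (fun=> btwo) (fun=> setT)).
  + by apply/bltP.
  + by move=> _; apply/bltP.
  + by move=> _; exact: setT2.
  + by apply/seteqP; split => x //; case=> n _ /=.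
Qed.

Lemma S2_of a (U V : nat -> set Y) : le' a btwo -> le' btwo a ->
  (forall n, open (U n)) -> (forall n, open (V n)) -> Sigma0 a (\bigcup_n (U n `\` V n)).
Proof. move=> h h' oU oV; apply: Sigma0_two oU oV _ => //; exact/beqP. Qed.

Lemma SH_of a (d : nat -> bord) (B : nat -> set Y) : lt' btwo a ->
  (forall n, lt' (d n) a) -> (forall n, Sigma0 (d n) (B n)) -> Sigma0 a (\bigcup_n ~` B n).
Proof. move=> h dn SB; apply: Sigma0_high SB _ => //; [exact/bltP|move=> n; exact/bltP]. Qed.

Lemma bigcup_cst T (A : set T) : \bigcup_(n : nat) A = A.
Proof. by apply/seteqP; split => [x [] //|x Ax]; exists 0%N. Qed.

Lemma closed2 A : open A -> Sigma0 btwo (~` A).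
Proof.
move=> oA; rewrite -setTD -(bigcup_cst (setT `\` A)).
apply: S2_of; try exact: le'_refl; move=> _; [exact: openT|exact: oA].
Qed.

Lemma open2 A : open A -> Sigma0 btwo A.
Proof.
move=> oA; rewrite -(setD0 A) -(bigcup_cst (A `\` set0)).
apply: S2_of; try exact: le'_refl; move=> _; [exact: oA|exact: open0].
Qed.

Lemma bigcup2 T (A B : set T) :
  A `|` B = \bigcup_n (if n is 0%N then A else B).
Proof.
apply/seteqP; split => x.
- by case=> H; [exists 0%N|exists 1%N].
- by case=> -[|n] _ H; [left|right].
Qed.

Lemma S_mono a b A : le' a b -> Sigma0 a A -> Sigma0 b A.
Proof.
move=> ab SA.
case: (classify a) => [/beqP [h h']|/beqP [h h']|/beqP [h h']|/bltP h].
- by rewrite (S_inv0 SA h); exact: S_empty.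
- have oA := S_inv1 SA h h'.
  have b1 : le' bone b by apply: le'_trans h' ab.
  case: (classify b) => [/beqP [g g']|/beqP [g g']|/beqP [g g']|/bltP g].
  + by case: no10; apply: le'_trans b1 g.
  + by apply: Sigma0_one => //; apply/beqP.
  + apply: (@S_beq btwo) => //; exact: open2.
  + rewrite -(setCK A) -(bigcup_cst (~` ~` A)).
    apply: (@SH_of _ (fun=> btwo)) => // _; exact: closed2.
- have [U [V [oU oV ->]]] := S_inv2 SA h h'.
  have b2 : le' btwo b by apply: le'_trans h' ab.
  case: (classify b) => [/beqP [g g']|/beqP [g g']|/beqP [g g']|/bltP g].
  + by case: no20; apply: le'_trans b2 g.
  + by case: no21; apply: le'_trans b2 g.
  + exact: S2_of.
  + have -> : \bigcup_n (U n `\` V n) = \bigcup_n ~` (~` U n `|` V n).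
      by apply/seteqP; split => x [n _ H]; exists n => //; move: H; rewrite setCU setCK.
    apply: (@SH_of _ (fun=> btwo)) => // n.
    rewrite bigcup2.
    have -> : (fun k => if k is 0%N then ~` U n else V n) = fun k =>
      (if k is 0%N then setT else V n) `\` (if k is 0%N then U n else set0).
      by apply: funext => -[|k]; rewrite ?setTD ?setD0.
    apply: S2_of; try exact: le'_refl.
    * by case=> [|k]; [exact: openT|exact: oV].
    * by case=> [|k]; [exact: oU|exact: open0].
- have [d [B [dn SB ->]]] := S_invH SA h.
  apply: SH_of SB; first exact: lt'_le'_trans h ab.
  move=> n; exact: lt'_le'_trans (dn n) ab.
Qed.

Lemma S_union a (A : nat -> set Y) : (forall n, Sigma0 a (A n)) -> Sigma0 a (\bigcup_n A n).
Proof.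
move=> SA.
case: (classify a) => [/beqP [h h']|/beqP [h h']|/beqP [h h']|/bltP h].
- have -> : \bigcup_n A n = set0.
    by apply/seteqP; split => x // [n _]; rewrite (S_inv0 (SA n) h).
  exact: S_empty.
- apply: Sigma0_one; first exact/beqP.
  by apply: bigcup_open => n _; exact: S_inv1 (SA n) h h'.
- have [UV HUV] := choice (fun n => S_inv2 (SA n) h h') .
  have [F HF] := choice (fun n => HUV n).
  have -> : \bigcup_n A n = \bigcup_n \bigcup_m (UV n m `\` F n m).
    by apply: eq_bigcupr => n _; case: (HF n).
  rewrite bigcup_pairE; apply: S2_of => // k.
  + by case: (HF (Cantor.of_nat k).1) => + _ _; apply.
  + by case: (HF (Cantor.of_nat k).1) => _ + _; apply.
- have [d Hd] := choice (fun n => S_invH (SA n) h).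
  have [F HF] := choice (fun n => Hd n).
  have -> : \bigcup_n A n = \bigcup_n \bigcup_m ~` (F n m).
    by apply: eq_bigcupr => n _; case: (HF n).
  rewrite bigcup_pairE.
  apply: (@SH_of _ (fun k => d (Cantor.of_nat k).1 (Cantor.of_nat k).2)) => // k.
  + by case: (HF (Cantor.of_nat k).1) => + _ _; apply.
  + by case: (HF (Cantor.of_nat k).1) => _ + _; apply.
Qed.

Lemma S_setU a A B : Sigma0 a A -> Sigma0 a B -> Sigma0 a (A `|` B).
Proof. by move=> SA SB; rewrite bigcup2; apply: S_union => -[|n]. Qed.

Lemma S_setT a : le' bone a -> Sigma0 a (@setT Y).
Proof. move=> h; apply: S_mono h _; apply: Sigma0_one; [exact/beqP; split|exact: openT]. Qed.

Lemma S_setI a A B : Sigma0 a A -> Sigma0 a B -> Sigma0 a (A `&` B).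
Proof.
move=> SA SB.
case: (classify a) => [/beqP [h h']|/beqP [h h']|/beqP [h h']|/bltP h].
- by rewrite (S_inv0 SA h) set0I; exact: S_empty.
- apply: Sigma0_one; first exact/beqP.
  exact: openI (S_inv1 SA h h') (S_inv1 SB h h').
- have [U [V [oU oV ->]]] := S_inv2 SA h h'.
  have [U' [V' [oU' oV' ->]]] := S_inv2 SB h h'.
  have -> : \bigcup_n (U n `\` V n) `&` \bigcup_n (U' n `\` V' n) =
     \bigcup_n \bigcup_m ((U n `&` U' m) `\` (V n `|` V' m)).
    apply/seteqP; split => x.
    - by case=> -[n _ [Ux Vx]] [m _ [Ux' Vx']]; exists n => //; exists m => //; split => // -[].
    - case=> n _ [m _ [[Ux Ux'] H]]; split.
      + by exists n => //; split => // H'; apply: H; left.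
      + by exists m => //; split => // H'; apply: H; right.
  rewrite bigcup_pairE; apply: S2_of => // k; [apply: openI|apply: openU] => //.
- have [d [C [dn SC ->]]] := S_invH SA h.
  have [d' [C' [dn' SC' ->]]] := S_invH SB h.
  have -> : \bigcup_n ~` C n `&` \bigcup_n ~` C' n =
     \bigcup_n \bigcup_m ~` (C n `|` C' m).
    apply/seteqP; split => x.
    - by case=> -[n _ Cx] [m _ Cx']; exists n => //; exists m => //; rewrite setCU.
    - by case=> n _ [m _]; rewrite setCU => -[Cx Cx']; split; [exists n|exists m].
  rewrite bigcup_pairE.
  pose e n m := if pselect (le' (d n) (d' m)) then d' m else d n.
  apply: (@SH_of _ (fun k => e (Cantor.of_nat k).1 (Cantor.of_nat k).2)) => // k.
  + by rewrite /e; case: pselect => ?; [exact: dn'|exact: dn].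
  + rewrite /e; case: pselect => H''; apply: S_setU.
    * exact: S_mono H'' (SC _).
    * exact: SC'.
    * exact: SC.
    * apply: S_mono (SC' _).
      have [[//|/lt'_le' //] _] := le'_tot (d (Cantor.of_nat k).1) (d' (Cantor.of_nat k).2).
Qed.

Lemma S_compl a b B : le' btwo a -> lt' b a -> Sigma0 b B -> Sigma0 a (~` B).
Proof.
move=> a2 ba SB.
case: (classify a) => [/beqP [h h']|/beqP [h h']|/beqP [h h']|/bltP h].
- by case: no20; apply: le'_trans a2 h.
- by case: no21; apply: le'_trans a2 h.
- have b1 : le' b bone by exact: lt'_le'_trans ba h.
  case: (classify b) => [/beqP [g g']|/beqP [g g']|/beqP [g g']|/bltP g].
  + by rewrite (S_inv0 SB g) setC0; apply: S_setT; apply: le'_trans a2.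
  + by apply: (S_beq (closed2 (S_inv1 SB g g'))).
  + by case: no21; apply: le'_trans g' b1.
  + by case: no21; apply: le'_trans (lt'_le' g) b1.
- by rewrite -(bigcup_cst (~` B)); apply: (@SH_of _ (fun=> b)).
Qed.
End Sig.

Lemma S_pre (Z Y : topologicalType) (f : Z -> Y) a (A : set Y) :
  continuous f -> Sigma0 a A -> Sigma0 a (f @^-1` A).
Proof.
move=> cf; elim => {a A}.
- by move=> a h; rewrite preimage_set0; apply: Sigma0_zero.
- move=> a A h oA; apply: Sigma0_one => //; apply: open_comp => // x _; exact: cf.
- move=> a A U V h oU oV ->; rewrite preimage_bigcup.
  have -> : (fun n => f @^-1` (U n `\` V n)) = fun n => (f @^-1` U n) `\` (f @^-1` V n).
    by apply: funext => n; apply/seteqP; split => x.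
  by apply: Sigma0_two h _ _ _ => // n; apply: open_comp => // x _; exact: cf.
- move=> a A b B h hb SB IH ->; rewrite preimage_bigcup.
  have -> : (fun n => f @^-1` (~` B n)) = fun n => ~` (f @^-1` B n).
    by apply: funext => n; rewrite preimage_setC.
  exact: Sigma0_high h hb IH _.
Qed.


Lemma ex_min (P : nat -> Prop) : (exists k, P k) -> exists k, P k /\ forall j, (j < k)%N -> ~ P j.
Proof.
move=> ex.
have ex' : exists k, `[< P k >] by case: ex => k Pk; exists k; exact/asboolP.
case: (ex_minnP ex') => k /asboolP Pk H; exists k; split => // j jk Pj.
have := H j (introT (asboolP _) Pj); rewrite leqNgt jk //.
Qed.

Section Reduction.
Context {T : Type} (S : set T -> Prop).
Hypothesis S0 : S set0.
Hypothesis ST : S setT.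
Hypothesis SI : forall A B, S A -> S B -> S (A `&` B).
Hypothesis SU : forall A : nat -> set T, (forall n, S (A n)) -> S (\bigcup_n A n).
Hypothesis SD : forall A, S A -> exists P : nat -> set T,
   [/\ A = \bigcup_n P n, forall n, S (P n) & forall n, S (~` P n)].

Lemma reduction (A : nat -> set T) : (forall n, S (A n)) ->
  exists A' : nat -> set T, [/\ forall n, S (A' n), forall n, A' n `<=` A n,
     forall n m x, A' n x -> A' m x -> n = m &
     \bigcup_n A' n = \bigcup_n A n].
Proof.
move=> SA.
have [P HP] := choice (fun n => SD (SA n)).
pose Q k := P (Cantor.of_nat k).1 (Cantor.of_nat k).2.
have SQ k : S (Q k) by case: (HP (Cantor.of_nat k).1) => _ + _; apply.
have SQc k : S (~` Q k) by case: (HP (Cantor.of_nat k).1) => _ _; apply.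
pose I k := \bigcap_(j in [set j | (j < k)%N]) ~` Q j.
have SI' k : S (I k).
  elim: k => [|k IH].
    have -> : I 0%N = setT by apply/seteqP; split => // x _ j.
    exact: ST.
  have -> : I k.+1 = I k `&` ~` Q k.
    apply/seteqP; split => x.
    - move=> H; split; first by move=> j /= jk; apply: H => /=; apply: ltnW.
      by apply: H => /=.
    - case=> H1 H2 j /=; rewrite ltnS leq_eqVlt => /orP [/eqP ->|jk] //.
      exact: H1.
  exact: SI.
pose R k := Q k `&` I k.
pose A' n := \bigcup_k (if (Cantor.of_nat k).1 == n then R k else set0).
have QA k x : Q k x -> A (Cantor.of_nat k).1 x.
  by case: (HP (Cantor.of_nat k).1) => -> _ _ Qx; exists (Cantor.of_nat k).2.
exists A'; split.
- move=> n; apply: SU => k; case: ifP => _; [exact: SI|exact: S0].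
- move=> n x [k _]; case: ifP => [/eqP <- [Qx _]|//]; exact: QA.
- move=> n m x [k _ +] [k' _]; case: ifP => [/eqP <-|//]; case: ifP => [/eqP <-|//].
  move=> [Qx' Ix'] [Qx Ix]; congr fst.
  have [kk'|k'k|->] := ltngtP k k' => //.
  + by case: (Ix k kk').
  + by case: (Ix' k' k'k).
- apply/seteqP; split => x.
  + by case=> n _ [k _]; case: ifP => [_ [Qx _]|//]; exists (Cantor.of_nat k).1 => //; exact: QA.
  + case=> n _; case: (HP n) => -> _ _ [m _ Px].
    have [k [Qk Hk]] : exists k, Q k x /\ forall j, (j < k)%N -> ~ Q j x.
      apply: ex_min; exists (Cantor.to_nat (n, m)).
      by rewrite /Q Cantor.cancel_of_to.
    exists (Cantor.of_nat k).1 => //; exists k => //; rewrite eqxx; split => //.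
Qed.
End Reduction.

Lemma S_delta (Y : topologicalType) a (A : set Y) : le' btwo a -> Sigma0 a A ->
  exists P : nat -> set Y, [/\ A = \bigcup_n P n, forall n, Sigma0 a (P n) &
     forall n, Sigma0 a (~` P n)].
Proof.
move=> a2 SA.
case: (classify a) => [/beqP [h h']|/beqP [h h']|/beqP [h h']|/bltP h].
- by case: no20; apply: le'_trans a2 h.
- by case: no21; apply: le'_trans a2 h.
- have [U [V [oU oV ->]]] := S_inv2 SA h h'.
  exists (fun n => U n `\` V n); split => // n.
  + rewrite -(bigcup_cst (U n `\` V n)); exact: S2_of.
  + rewrite setCD; apply: S_setU.
    * exact: S_beq (closed2 (oU n)) h' h.
    * exact: S_beq (open2 (oV n)) h' h.
- have [d [B [dn SB ->]]] := S_invH SA h.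
  exists (fun n => ~` B n); split => // n.
  + exact: S_compl a2 (dn n) (SB n).
  + rewrite setCK; exact: S_mono (lt'_le' (dn n)) (SB n).
Qed.

Lemma S_reduction (Y : topologicalType) a : le' btwo a ->
  forall A : nat -> set Y, (forall n, Sigma0 a (A n)) ->
  exists A' : nat -> set Y, [/\ forall n, Sigma0 a (A' n), forall n, A' n `<=` A n,
     forall n m x, A' n x -> A' m x -> n = m &
     \bigcup_n A' n = \bigcup_n A n].
Proof.
move=> a2; apply: reduction.
- exact: S_empty.
- apply: S_setT; exact: le'_trans (I : le' bone btwo) a2.
- move=> A B; exact: S_setI.
- move=> A; exact: S_union.
- move=> A; exact: S_delta a2.
Qed.

Definition cyl (a : nat -> nat) (m : nat) : set baire := [set b | forall i, (i < m)%N -> b i = a i].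

Lemma nat_nbhsE (n : nat) (A : set nat) : nbhs n A <-> A n.
Proof. by rewrite nbhs_principalE; exact: principal_filterP. Qed.

Lemma nbhs_coord (a : baire) i : nbhs a [set b : baire | b i = a i].
Proof.
have := @proj_continuous nat (fun _ => nat) i a.
move=> /(_ [set a i]) H; apply: H; exact/nat_nbhsE.
Qed.

Lemma nbhs_cyl (a : baire) m : nbhs a (cyl a m).
Proof.
elim: m => [|m IH].
  by apply: filterS filterT => b _ i.
apply: filterS (filterI IH (nbhs_coord a m)) => b [H1 H2] i.
by rewrite ltnS leq_eqVlt => /orP [/eqP ->|/H1].
Qed.

Lemma cyl_of_nbhs (a : baire) A : nbhs a A -> exists m, cyl a m `<=` A.
Proof.
pose F := filter_from [set: nat] (cyl a).
have FF : Filter F.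
  apply: filter_from_filter; first by exists 0%N.
  move=> i j _ _; exists (maxn i j) => // b H; split => l l_lt; apply: H.
  - by apply: leq_trans l_lt _; rewrite leq_maxl.
  - by apply: leq_trans l_lt _; rewrite leq_maxr.
have : {ptws, F --> (a : {ptws nat -> nat})}.
  apply/pointwise_cvgP => t B /nat_nbhsE Bt.
  exists t.+1 => // b Hb /=; rewrite Hb //.
by move=> /(_ A) H /H [m _ Hm]; exists m.
Qed.

Lemma cont_baire (g : baire -> baire) :
  (forall a j, exists m, forall b, cyl a m b -> g b j = g a j) -> continuous g.
Proof.
move=> H a.
apply/pointwise_cvgP => t B /nat_nbhsE Bt.
have [m Hm] := H a t.
apply: filterS (nbhs_cyl a m) => b /Hm /= ->.
exact: Bt.
Qed.

Lemma baire_cont_loc (g : baire -> baire) : continuous g ->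
  forall a j, exists m, forall b, cyl a m b -> g b j = g a j.
Proof.
move=> cg a j.
have := cg a [set c : baire | c j = g a j] (nbhs_coord (g a) j).
by move=> /cyl_of_nbhs [m Hm]; exists m => b /Hm.
Qed.

Lemma prod_nbhsP (T U : topologicalType) (p : T * U) (A : set (T * U)) :
  nbhs p A <-> exists P Q, [/\ nbhs p.1 P, nbhs p.2 Q & P `*` Q `<=` A].
Proof.
split.
- by case=> -[P Q] /= [HP HQ] H; exists P, Q.
- by case=> P [Q [HP HQ H]]; exists (P, Q).
Qed.

Lemma openP (T : topologicalType) (A : set T) : open A <-> forall x, A x -> nbhs x A.
Proof. by rewrite openE. Qed.

Lemma cont_map1 (X : topologicalType) (f : baire -> baire) : continuous f ->
  continuous (fun z : baire * X => (f z.1, z.2)).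
Proof.
move=> cf [a x] W /prod_nbhsP [P [Q [HP HQ H]]].
apply/prod_nbhsP; exists (f @^-1` P), Q; split => //.
- exact: cf.
- by move=> [b y] [/= Pb Qy]; apply: H.
Qed.

Lemma cont_sec (X : topologicalType) (b : baire) : continuous (fun x : X => (b, x)).
Proof.
move=> x W /prod_nbhsP [P [Q [HP HQ H]]].
apply: filterS HQ => y Qy; apply: H; split => //=; exact: nbhs_singleton.
Qed.

Definition bproj (j : nat) (a : baire) : baire := fun m => a (Cantor.to_nat (j, m)).
Definition bcomb (gs : nat -> baire -> baire) (a : baire) : baire :=
  fun k => gs (Cantor.of_nat k).1 a (Cantor.of_nat k).2.

Lemma bproj_cont j : continuous (bproj j).
Proof.
apply: cont_baire => a i; exists (Cantor.to_nat (j, i)).+1 => b Hb.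
by rewrite /bproj Hb.
Qed.

Lemma bcombK gs j a : bproj j (bcomb gs a) = gs j a.
Proof. by apply: funext => m; rewrite /bproj /bcomb Cantor.cancel_of_to. Qed.

Lemma bcomb_cont gs : (forall j, continuous (gs j)) -> continuous (bcomb gs).
Proof.
move=> cg; apply: cont_baire => a k.
have [m Hm] := baire_cont_loc (cg (Cantor.of_nat k).1) a (Cantor.of_nat k).2.
by exists m => b Hb; rewrite /bcomb Hm.
Qed.

Lemma cst_cont (c : baire) : continuous (fun _ : baire => c).
Proof. by apply: cont_baire => a j; exists 0%N. Qed.


Fixpoint preds (t : bord) : nat -> option bord :=
  match t with
  | bzero => fun _ => None
  | bsucc t0 => fun _ => Some t0
  | blim f => fun n => preds (f (Cantor.of_nat n).1) (Cantor.of_nat n).2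
  end.

Lemma preds_lt t n b : preds t n = Some b -> lt' b t.
Proof.
elim: t n => [//|t0 _|f IH] n /=.
- by case=> <-; exact: le'_refl.
- by move=> /IH H; exists (Cantor.of_nat n).1.
Qed.

Lemma preds_cof t b : lt' b t -> exists n c, preds t n = Some c /\ le' b c.
Proof.
elim: t => [//|t0 _|f IH] /=.
- by move=> H; exists 0%N, t0.
- case=> i /IH [n [c [H1 H2]]]; exists (Cantor.to_nat (i, n)), c.
  by rewrite Cantor.cancel_of_to.
Qed.

Definition cofseq (t : bord) (m : nat) : bord :=
  match preds t m with
  | Some b => if pselect (le' btwo b) then b else btwo
  | None => btwo end.

Lemma cof_lt t m : lt' btwo t -> lt' (cofseq t m) t.
Proof.
move=> h; rewrite /cofseq; case E: (preds t m) => [b|]; last exact: h.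
case: pselect => ?; [exact: preds_lt E|exact: h].
Qed.

Lemma cof_ge t m : le' btwo (cofseq t m).
Proof.
rewrite /cofseq; case: (preds t m) => [b|]; last exact: le'_refl.
by case: pselect => // ?; exact: le'_refl.
Qed.

Lemma cof_cof t b : lt' b t -> exists m, le' b (cofseq t m).
Proof.
move=> /preds_cof [m [c [E bc]]]; exists m; rewrite /cofseq E.
case: pselect => // H.
have [[H1|H1] _] := le'_tot btwo c; last by case: H; exact: lt'_le'.
exact: le'_trans bc H1.
Qed.

Section Univ.
Context {X : topologicalType}.

Definition univ (th : bord) (d : baire -> set X) :=
  Sigma0 th [set z : baire * X | d z.1 z.2] /\
  forall V : set (baire * X), Sigma0 th V ->
    exists g : baire -> baire, continuous g /\ forall a x, V (a, x) <-> d (g a) x.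

Lemma enum_base : @second_countable X -> exists e : nat -> set X,
  (forall n, open (e n)) /\
  forall x W, nbhs x W -> exists n, e n x /\ e n `<=` W.
Proof.
case=> B cB [Bo Bb].
have [f finj] : exists f : set X -> nat, {in B &, injective f} by exact/pcard_injP.
pose e n := match pselect (exists U, B U /\ f U = n) with
  | left H => proj1_sig (cid H) | right _ => set0 end.
have eB U : B U -> e (f U) = U.
  move=> BU; rewrite /e; case: pselect => [H|H]; last by case: H; exists U.
  case: (cid H) => V [BV fV] /=; apply: finj => //; by rewrite inE.
exists e; split.
- move=> n; rewrite /e; case: pselect => [H|_]; last exact: open0.
  by case: (cid H) => V [BV _] /=; exact: Bo.
- move=> x W xW.
  have := Bb x W xW; case=> U [BU Ux] UW.
  by exists (f U); rewrite eB.
Qed.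

Definition d1 (e : nat -> set X) (a : baire) : set X :=
  \bigcup_n (if a n is k.+1 then e k else set0).

Lemma univ1 (e : nat -> set X) : (forall n, open (e n)) ->
  (forall x W, nbhs x W -> exists n, e n x /\ e n `<=` W) ->
  univ bone (d1 e).
Proof.
move=> eo eb.
have S1 V : Sigma0 bone V <-> open V.
  split; [move=> SV; exact: S_inv1 SV (le'_refl _) (le'_refl _)|].
  by move=> oV; apply: Sigma0_one => //; apply/beqP; split; exact: le'_refl.
split.
- apply/S1/openP => -[a x] /= [n _].
  case E: (a n) => [//|k] ekx.
  apply/prod_nbhsP; exists (cyl a n.+1), (e k); split => //.
  + exact: nbhs_cyl.
  + by apply: open_nbhs_nbhs; split => //; exact: eo.
  + move=> [b y] [/= Hb ey]; exists n => //; rewrite Hb // E //.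
- move=> V /S1 oV.
  pose g (a : baire) : baire := fun j =>
    if pselect (cyl a (Cantor.of_nat j).1 `*` e (Cantor.of_nat j).2 `<=` V)
    then (Cantor.of_nat j).2.+1 else 0%N.
  exists g; split.
  + apply: cont_baire => a j; exists (Cantor.of_nat j).1 => b Hb; rewrite /g.
    have -> : cyl b (Cantor.of_nat j).1 = cyl a (Cantor.of_nat j).1.
      apply/seteqP; split => c Hc i ilt; [rewrite Hc // Hb //|rewrite Hc // -Hb //].
    by [].
  + move=> a x; split.
    * move=> Vax; have := (openP V).1 oV _ Vax.
      case/prod_nbhsP => P [Q [/= /cyl_of_nbhs [m Hm] /eb [k [ekx ekQ]] H]].
      exists (Cantor.to_nat (m, k)) => //.
      rewrite /g Cantor.cancel_of_to /=; case: pselect => // H'; case: H'.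
      by move=> [b y] [/= /Hm Pb /ekQ Qy]; apply: H.
    * case=> j _; rewrite /g; case: pselect => // H ex.
      by apply: (H (a, x)); split => //=.
Qed.

Definition d2 (d : baire -> set X) (a : baire) : set X :=
  \bigcup_n (d (bproj n.*2 a) `\` d (bproj n.*2.+1 a)).

Lemma joint_pre th (d : baire -> set X) j : Sigma0 th [set z : baire * X | d z.1 z.2] ->
  Sigma0 th [set z : baire * X | d (bproj j z.1) z.2].
Proof.
move=> S; have := S_pre ((@cont_map1 X _ (@bproj_cont j))) S.
by congr Sigma0.
Qed.

Lemma univ_two th d : le' th btwo -> le' btwo th -> univ bone d -> univ th (d2 d).
Proof.
move=> h h' [J1 P1].
have o1 j : open [set z : baire * X | d (bproj j z.1) z.2].
  exact: S_inv1 (joint_pre j J1) (le'_refl _) (le'_refl _).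
split.
- have -> : [set z : baire * X | d2 d z.1 z.2] =
    \bigcup_n ([set z : baire * X | d (bproj n.*2 z.1) z.2] `\`
               [set z : baire * X | d (bproj n.*2.+1 z.1) z.2]).
    by apply/seteqP; split => z.
  by apply: S2_of.
- move=> V SV; have [U [W [oU oW ->]]] := S_inv2 SV h h'.
  have SU n : Sigma0 bone (U n).
    by apply: Sigma0_one => //; apply/beqP; split; exact: le'_refl.
  have SW n : Sigma0 bone (W n).
    by apply: Sigma0_one => //; apply/beqP; split; exact: le'_refl.
  have [g Hg] := choice (fun n => P1 _ (SU n)).
  have [g' Hg'] := choice (fun n => P1 _ (SW n)).
  pose gs j := if odd j then g' j./2 else g j./2.
  exists (bcomb gs); split.
  + apply: bcomb_cont => j; rewrite /gs; case: odd.
    * by case: (Hg' j./2).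
    * by case: (Hg j./2).
  + have E1 n a : bproj n.*2 (bcomb gs a) = g n a.
      by rewrite bcombK /gs odd_double doubleK.
    have E2 n a : bproj n.*2.+1 (bcomb gs a) = g' n a.
      by rewrite bcombK /gs /= odd_double /= uphalf_double.
    move=> a x; split.
    * case=> n _ [Un Wn]; exists n => //; rewrite E1 E2; split.
      - by apply/(proj1 (proj2 (Hg n) a x)).
      - by move=> H; apply: Wn; apply/(proj2 (proj2 (Hg' n) a x)).
    * case=> n _; rewrite E1 E2 => -[Un Wn]; exists n => //; split.
      - by apply/(proj2 (proj2 (Hg n) a x)).
      - by move=> H; apply: Wn; apply/(proj1 (proj2 (Hg' n) a x)).
Qed.

Definition dH (ds : nat -> baire -> set X) (a : baire) : set X :=
  \bigcup_j ~` ds (Cantor.of_nat j).1 (bproj j a).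

Lemma univ_high th ds : lt' btwo th -> (forall m, univ (cofseq th m) (ds m)) ->
  univ th (dH ds).
Proof.
move=> h u.
split.
- have -> : [set z : baire * X | dH ds z.1 z.2] =
    \bigcup_j ~` [set z : baire * X | ds (Cantor.of_nat j).1 (bproj j z.1) z.2].
    by apply/seteqP; split => z.
  apply: (@SH_of _ _ (fun j => cofseq th (Cantor.of_nat j).1)) => // j.
  + exact: cof_lt.
  + apply: joint_pre; exact: (proj1 (u _)).
- move=> V SV; have [dd [B [ddn SB ->]]] := S_invH SV h.
  have [mm Hmm] := choice (fun n => cof_cof (ddn n)).
  have SB' n : Sigma0 (cofseq th (mm n)) (B n) by exact: S_mono (Hmm n) (SB n).
  have [g Hg] := choice (fun n => proj2 (u (mm n)) _ (SB' n)).
  have [ee Hee] := choice (fun m => proj2 (u m) _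
     (S_setT (le'_trans (I : le' bone btwo) (cof_ge th m)))).
  pose gs j := if (Cantor.of_nat j).1 == mm (Cantor.of_nat j).2 then g (Cantor.of_nat j).2
               else fun _ : baire => ee (Cantor.of_nat j).1 (fun _ => 0%N).
  exists (bcomb gs); split.
  + apply: bcomb_cont => j; rewrite /gs; case: eqP => _.
    * by case: (Hg (Cantor.of_nat j).2).
    * exact: cst_cont.
  + move=> a x; split.
    * case=> n _ nB; exists (Cantor.to_nat (mm n, n)) => //.
      rewrite bcombK /gs Cantor.cancel_of_to /= eqxx.
      by move=> H; apply: nB; apply/(proj2 (proj2 (Hg n) a x)).
    * case=> j _; rewrite bcombK /gs; case: eqP => [E|_] H.
      - exists (Cantor.of_nat j).2 => // Bx; apply: H; rewrite E.
        exact/(proj1 (proj2 (Hg _) a x)).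
      - by case: H; apply/(proj1 (proj2 (Hee _) (fun _ => 0%N) x)).
Qed.

Lemma univ_ex : @second_countable X -> forall th, le' btwo th -> exists d, univ th d.
Proof.
move=> sc th; have [e [eo eb]] := enum_base sc.
have u1 := univ1 eo eb.
elim: (lt'_acc th) => {}th _ IH th2.
case: (classify th) => [/beqP [g g']|/beqP [g g']|/beqP [g g']|/bltP g].
- by case: no20; exact: le'_trans th2 g.
- by case: no21; exact: le'_trans th2 g.
- by exists (d2 (d1 e)); exact: univ_two.
- have [ds Hds] := choice (fun m => IH _ (cof_lt m g) (cof_ge th m)).
  by exists (dH ds); exact: univ_high.
Qed.
End Univ.

Section Fin.
Context {A : Type} (R : A -> A -> Prop).
Hypothesis Rtrans : forall x y z, R x y -> R y z -> R x z.
Hypothesis Rirr : forall x, ~ R x x.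

Lemma no_inf_seq (C : set A) (s : nat -> A) : finite_set C ->
  (forall n, C (s n)) -> (forall n, R (s n.+1) (s n)) -> False.
Proof.
move=> fC Cs Rs.
have Rlt n m : (n < m)%N -> R (s m) (s n).
  elim: m => [//|m IH]; rewrite ltnS leq_eqVlt => /orP [/eqP ->|/IH H] //.
  exact: Rtrans (Rs m) H.
have sinj : injective s.
  move=> n m E; have [nm|mn|//] := ltngtP n m.
  - by have := Rlt _ _ nm; rewrite E => /Rirr.
  - by have := Rlt _ _ mn; rewrite E => /Rirr.
have fr : finite_set (range s).
  by apply: sub_finite_set fC => _ [n _ <-].
have : finite_set (s @^-1` range s).
  by apply: finite_preimage => // x y _ _; apply: sinj.
have -> : s @^-1` range s = setT by apply/seteqP; split => // n _; exists n.
exact: infinite_nat.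
Qed.

Lemma fin_minimal (C : set A) c0 : finite_set C -> C c0 ->
  exists m, C m /\ forall q, C q -> ~ R q m.
Proof.
move=> fC Cc0; apply: contrapT => H.
have H' : forall p, exists q, C p -> C q /\ R q p.
  move=> p; have [Cp|nCp] := pselect (C p); last by exists p.
  have : ~ (C p /\ forall q, C q -> ~ R q p) by move=> K; apply: H; exists p.
  move=> /not_andP [//|/existsNP [q /not_implyP [Cq /contrapT Rq]]].
  by exists q.
have [f Hf] := choice H'.
pose s n := iter n f c0.
have Cs n : C (s n) by elim: n => [//|n IH] /=; case: (Hf (s n) IH).
apply: (no_inf_seq fC Cs) => n; by case: (Hf (s n) (Cs n)).
Qed.

Lemma fin_acc (P : A -> set A) : (forall p, finite_set (P p)) ->
  (forall p q, R q p -> P p q) -> (forall p q q', P p q -> R q' q -> P p q') ->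
  forall p, Acc R p.
Proof.
move=> fP HP HPt p; apply: contrapT => nA.
have H' : forall x, exists y, ~ Acc R x -> ~ Acc R y /\ R y x.
  move=> x; have [Ax|nAx] := pselect (Acc R x); first by exists x.
  have : ~ forall y, R y x -> Acc R y by move=> K; apply: nAx; constructor.
  move=> /existsNP [y /not_implyP [Ryx nAy]]; by exists y.
have [f Hf] := choice H'.
pose s n := iter n f p.
have nAs n : ~ Acc R (s n) by elim: n => [//|n IH] /=; case: (Hf (s n) IH).
have Rs n : R (s n.+1) (s n) by case: (Hf (s n) (nAs n)).
have Ps n : P p (s n.+1).
  elim: n => [|n IH]; first exact: HP (Rs 0%N).
  exact: HPt IH (Rs n.+1).
apply: (no_inf_seq (fP p) Ps) => n; exact: Rs.
Qed.
End Fin.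

Section Order.
Context {k : nat} (T : kforest k).
Local Notation node := (fnode T).

Lemma flt_trans (x y z : node) : flt x y -> flt y z -> flt x z.
Proof.
move=> [xy nxy] [yz nyz]; split; first exact: fle_trans xy yz.
move=> E; subst z; apply: nxy; exact: fle_antisym xy yz.
Qed.

Lemma flt_irr (x : node) : ~ flt x x.
Proof. by case. Qed.

Definition is_chain (C : set node) := forall x y, C x -> C y -> fle x y \/ fle y x.

Lemma chain_min (C : set node) c0 : is_chain C -> C c0 ->
  exists m, C m /\ forall q, C q -> fle m q.
Proof.
move=> cC Cc0.
have [m [Cm Hm]] := fin_minimal (@flt_trans) (@flt_irr) (fle_chains_finite cC) Cc0.
exists m; split => // q Cq; case: (cC m q Cm Cq) => // qm.
have [->|nqm] := pselect (q = m); first exact: fle_refl.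
by case: (Hm q Cq).
Qed.

Lemma chain_max (C : set node) c0 : is_chain C -> C c0 ->
  exists m, C m /\ forall q, C q -> fle q m.
Proof.
move=> cC Cc0.
have [m [Cm Hm]] := @fin_minimal _ (fun x y => flt y x)
  (fun x y z h1 h2 => flt_trans h2 h1) (@flt_irr) _ _ (fle_chains_finite cC) Cc0.
exists m; split => // q Cq; case: (cC m q Cm Cq) => // qm.
have [->|nqm] := pselect (m = q); first exact: fle_refl.
by case: (Hm q Cq).
Qed.

Lemma cone_chain (p : node) : is_chain [set q | fle p q].
Proof. move=> x y; exact: fle_cones_chains. Qed.

Definition child (c p : node) := flt c p /\ forall s, flt c s -> fle s p -> s = p.

Lemma child_ex (q p : node) : flt q p -> exists c, child c p /\ fle q c.
Proof.
move=> qp.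
have cC : is_chain [set s | fle q s /\ flt s p].
  by move=> x y [qx _] [qy _]; exact: fle_cones_chains qx qy.
have [c [[qc cp] Hc]] := chain_max cC (conj (fle_refl q) qp).
exists c; split => //; split => // s cs sp.
apply: contrapT => nsp.
have : fle s c by apply: Hc; split; [exact: fle_trans qc cs.1|].
move=> sc; case: cs => cs ncs; apply: ncs; exact: fle_antisym cs sc.
Qed.

Lemma child_uniq (c p p' : node) : child c p -> child c p' -> p = p'.
Proof.
move=> [cp Hp] [cp' Hp'].
case: (fle_cones_chains cp.1 cp'.1) => H.
- exact: Hp' cp H.
- by apply: esym; apply: Hp cp' H.
Qed.

Lemma child_above (c p q : node) : child c p -> flt c q -> fle p q.
Proof.
move=> [cp Hp] cq.
case: (fle_cones_chains cp.1 cq.1) => // qp.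
by rewrite (Hp q cq qp); exact: fle_refl.
Qed.

Lemma up_acc : forall p : node, Acc (fun q p => flt p q) p.
Proof.
apply: (@fin_acc _ (fun q p => flt p q) (fun x y z h1 h2 => flt_trans h2 h1) (@flt_irr)
  (fun p => [set q | fle p q])).
- move=> p; apply: fle_chains_finite => x y; exact: fle_cones_chains.
- by move=> p q [].
- by move=> p q q' pq [qq' _]; exact: fle_trans pq qq'.
Qed.
End Order.

Section Normalize.
Context {k : nat} (T : kforest k) (r : fnode T) (hr : forall x, fle x r).
Local Notation node := (fnode T).
Context {Z : Type} (S : set Z -> Prop).
Hypothesis S0 : S set0.
Hypothesis ST : S setT.
Hypothesis SI : forall A B, S A -> S B -> S (A `&` B).
Hypothesis SU : forall A : nat -> set Z, (forall n, S (A n)) -> S (\bigcup_n A n).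
Hypothesis SRed : forall A : nat -> set Z, (forall n, S (A n)) ->
  exists A' : nat -> set Z, [/\ forall n, S (A' n), forall n, A' n `<=` A n,
     forall n m x, A' n x -> A' m x -> n = m &
     \bigcup_n A' n = \bigcup_n A n].
Variable idx : node -> nat.
Hypothesis idx_inj : injective idx.

Lemma SUn (P : set node) (F : node -> set Z) :
  (forall p, P p -> S (F p)) -> S (\bigcup_(p in P) F p).
Proof.
move=> SF.
pose H n := match pselect (exists p, P p /\ idx p = n) with
  | left h => F (proj1_sig (cid h)) | right _ => set0 end.
have -> : \bigcup_(p in P) F p = \bigcup_n H n.
  apply/seteqP; split => z.
  - case=> p Pp Fz; exists (idx p) => //; rewrite /H; case: pselect => [h|[]]; last by exists p.
    case: (cid h) => q /= Hq; have E : q = p := idx_inj (proj2 Hq); by rewrite E.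
  - case=> n _; rewrite /H; case: pselect => // h; case: (cid h) => q /= Hq Fz.
    by exists q => //; case: Hq.
apply: SU => n; rewrite /H; case: pselect => // h; case: (cid h) => q /= Hq.
by apply: SF; case: Hq.
Qed.

Lemma root_top (q : node) : fle r q -> q = r.
Proof. move=> rq; exact: fle_antisym (hr q) rq. Qed.

Variable F : node -> set Z.
Hypothesis SF : forall p, S (F p).

Let D p := \bigcup_(q in [set q | fle q p]) F q.
Let E p n := \bigcup_(c in [set c | child c p /\ idx c = n]) D c.

Let SD p : S (D p). Proof. by apply: SUn => q _. Qed.
Let SE p n : S (E p n). Proof. by apply: SUn => q _. Qed.

Lemma normalize : exists (G : node -> set Z) (lab : Z -> 'I_k),
  [/\ forall p, S (G p), \bigcup_p G p = setT,
      forall i : 'I_k, lab @^-1` [set i] =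
        \bigcup_(p in [set p | flabel p = i])
           (G p `\` \bigcup_(q in [set q | flt q p]) G q) &
      forall z, exists m, [/\ lab z = flabel m, m = r \/ F m z &
                             forall q, flt q m -> ~ F q z]].
Proof.
have [E' HE'] := choice (fun p => SRed (SE p)).
pose D' c := \bigcup_(p in [set p | child c p]) E' p (idx c).
have SD' c : S (D' c) by apply: SUn => p _; case: (HE' p).
pose G p := [set z | forall q, fle p q -> q <> r -> D' q z].
have GT : G r = setT by apply/seteqP; split => // z _ q /root_top.
have Gmono p q z : fle p q -> G p z -> G q z.
  by move=> pq Gp q' qq' nr; apply: Gp => //; exact: fle_trans pq qq'.
have flt_nr x y : flt x y -> x <> r.
  move=> [xy nxy] Exr; subst x; apply: nxy; exact: esym (root_top xy).
have par p : p <> r -> exists pp, child p pp.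
  move=> pr.
  have cC : is_chain [set s | flt p s].
    by move=> x y [px _] [py _]; exact: fle_cones_chains px py.
  have [pp [ppp Hpp]] := chain_min cC (conj (hr p) pr : flt p r).
  exists pp; split => // s ps sp; exact: fle_antisym sp (Hpp s ps).
have Gdec p pp : child p pp -> G p = D' p `&` G pp.
  move=> cp; apply/seteqP; split => z.
  - move=> Gz; split; first by apply: Gz; [exact: fle_refl|exact: flt_nr cp.1].
    apply: Gmono Gz; exact: cp.1.1.
  - case=> Dz Gz q pq qr; have [<-|npq] := pselect (p = q) => //.
    by apply: Gz => //; exact: child_above cp (conj pq npq).
have SG p : S (G p).
  elim: (up_acc p) => {}p _ IH.
  have [->|pr] := pselect (p = r); first by rewrite GT.
  have [pp cp] := par p pr.
  rewrite (Gdec _ _ cp); apply: SI => //; exact: IH cp.1.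
have D'P c pp z : child c pp -> D' c z -> E' pp (idx c) z.
  by move=> cp [p0 cp0 Ez]; rewrite (child_uniq cp cp0).
have chainG z : is_chain [set p | G p z].
  move=> p p' Gp Gp'; apply: contrapT => nc.
  have cM : is_chain [set s | fle p s /\ fle p' s].
    by move=> x y [px _] [py _]; exact: fle_cones_chains px py.
  have [s [[ps p's] Hs]] := chain_min cM (conj (hr p) (hr p')).
  have lps : flt p s by split => // Eq; subst s; apply: nc; right.
  have lp's : flt p' s by split => // Eq; subst s; apply: nc; left.
  have [c [cs pc]] := child_ex lps.
  have [c' [c's p'c']] := child_ex lp's.
  have Dc : D' c z by apply: Gp => //; exact: flt_nr cs.1.
  have Dc' : D' c' z by apply: Gp' => //; exact: flt_nr c's.1.
  have := HE' s => -[_ _ disj _].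
  have Ecc : c = c' by apply: idx_inj; exact: disj _ _ _ (D'P _ _ _ cs Dc) (D'P _ _ _ c's Dc').
  subst c'.
  have := Hs c (conj pc p'c') => sc.
  have [[cs1 ncs] _] := cs; apply: ncs; exact: fle_antisym cs1 sc.
have minz z : exists m, G m z /\ forall q, G q z -> fle m q.
  have Gr : G r z by rewrite GT.
  exact: chain_min (chainG z) Gr.
have [mz Hmz] := choice minz.
exists G, (fun z => flabel (mz z)); split => //.
- by apply/seteqP; split => // z _; exists r => //; rewrite GT.
- move=> i; apply/seteqP; split => z /=.
  + move=> Li; exists (mz z) => //; split; first by case: (Hmz z).
    case=> q [qm nqm] Gq; exact: nqm (fle_antisym qm ((proj2 (Hmz z)) q Gq)).
  + case=> p Lp [Gp nG]; rewrite /= -Lp; congr flabel.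
    have mp : fle (mz z) p by exact: (proj2 (Hmz z)) p Gp.
    apply: contrapT => nmp; apply: nG; exists (mz z); first by split.
    by case: (Hmz z).
- move=> z; exists (mz z); have [Gm Hm] := Hmz z.
  have A c : child c (mz z) -> ~ D c z.
    move=> cm Dc.
    have : (\bigcup_n E (mz z) n) z by exists (idx c) => //; exists c.
    have := HE' (mz z) => -[_ sub _ <-] -[n _ E'z].
    have := sub n z E'z => -[c' [c'm idc'] Dc'].
    have D'c : D' c' z by exists (mz z) => //; rewrite idc'.
    have Gc : G c' z by rewrite (Gdec c' (mz z) c'm); split.
    have := Hm c' Gc => mc.
    have [[c'm1 nc'm] _] := c'm; apply: nc'm; exact: fle_antisym c'm1 mc.
  have B q : flt q (mz z) -> ~ F q z.
    move=> qm Fq; have [c [cm qc]] := child_ex qm.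
    by apply: (A c cm); exists q.
  split => //.
  have [->|mr] := pselect (mz z = r); first by left.
  right.
  have := Gm (mz z) (fle_refl _) mr => -[pp cpp Ez].
  have := HE' pp => -[_ sub _ _].
  have := sub _ z Ez => -[c [cpp' idc] Dc].
  have cm : c = mz z by exact: idx_inj idc.
  subst c; case: Dc => q qm Fq.
  have [qe|nqe] := pselect (q = mz z); first by rewrite -qe.
  by case: (B q (conj qm nqe)).
Qed.
End Normalize.

Section Zero.
Context {X : topologicalType}.

Lemma zd_base : @second_countable X -> zero_dim X ->
  exists c : nat -> set X, (forall n, open (c n) /\ open (~` c n)) /\
  forall x W, nbhs x W -> exists n, c n x /\ c n `<=` W.
Proof.
move=> sc [B [[Bo Bb] Bc]].
have [e [eo eb]] := enum_base sc.
pose c j := match pselect (exists C, B C /\ e (Cantor.of_nat j).1 `<=` C /\ C `<=` e (Cantor.of_nat j).2) with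
  | left h => proj1_sig (cid h) | right _ => set0 end.
exists c; split.
- move=> j; rewrite /c; case: pselect => [h|_]; last by rewrite setC0; split; [exact: open0|exact: openT].
  case: (cid h) => C [BC _] /=; have [oC cC] := Bc C BC.
  by split => //; rewrite openC.
- move=> x W xW.
  have [j [ejx ejW]] := eb x W xW.
  have : nbhs x (e j) by apply: open_nbhs_nbhs; split => //; exact: eo.
  move=> /(Bb x) [C [BC Cx] Cej].
  have : nbhs x C by apply: open_nbhs_nbhs; split => //; exact: Bo.
  move=> /eb [i [eix eiC]].
  exists (Cantor.to_nat (i, j)); rewrite /c Cantor.cancel_of_to /=.
  case: pselect => [h|[]]; last by exists C.
  case: (cid h) => C' [_ [H1 H2]] /=; split; first exact: H1.
  by move=> y /H2 /ejW.
Qed.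

Definition pref (s : seq nat) : set baire :=
  [set b | forall l, (l < size s)%N -> b l = nth 0%N s l].

Lemma pref_open s : open (pref s).
Proof.
apply/openP => b Hb; apply: filterS (nbhs_cyl b (size s)) => b' H l ls.
by rewrite H // Hb.
Qed.

Lemma pref_openC s : open (~` pref s).
Proof.
apply/openP => b Hb.
have [l [ls bl]] : exists l, (l < size s)%N /\ b l <> nth 0%N s l.
  apply: contrapT => H; apply: Hb => l ls; apply: contrapT => H'; apply: H; by exists l.
apply: filterS (nbhs_cyl b l.+1) => b' H H'; apply: bl.
by rewrite -H' // H.
Qed.

Lemma box_open (Y : topologicalType) (A : set baire) (C : set Y) :
  open A -> open C -> open (A `*` C).
Proof.
move=> oA oC; apply/openP => -[a y] [/= Aa Cy]; apply/prod_nbhsP.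
exists A, C; split => //; apply: open_nbhs_nbhs; split => //.
Qed.

Lemma box_openC (Y : topologicalType) (A : set baire) (C : set Y) :
  open (~` A) -> open (~` C) -> open (~` (A `*` C)).
Proof.
move=> oA oC.
have -> : ~` (A `*` C) = (~` A) `*` setT `|` setT `*` (~` C).
  apply/seteqP; split => -[a y] /=.
  - move=> H; have [Aa|nA] := pselect (A a); last by left.
    by right; split => // Cy; apply: H.
  - by case=> -[H1 H2] [H3 H4]; [apply: H1|apply: H2].
apply: openU; apply: box_open => //; exact: openT.
Qed.

Lemma open_decomp : @second_countable X -> zero_dim X ->
  forall A : set (baire * X), open A ->
  exists P : nat -> set (baire * X), [/\ A = \bigcup_n P n,
     forall n, open (P n) & forall n, open (~` P n)].
Proof.
move=> sc zd A oA.
have [c [cc cb]] := zd_base sc zd.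
pose P j := match (unpickle (Cantor.of_nat j).1 : option (seq nat)) with
  | Some s => if pselect (pref s `*` c (Cantor.of_nat j).2 `<=` A)
              then pref s `*` c (Cantor.of_nat j).2 else set0
  | None => set0 end.
exists P; split.
- apply/seteqP; split => -[a x].
  + move=> Aax; have := (openP A).1 oA _ Aax.
    case/prod_nbhsP => Q [W [/= /cyl_of_nbhs [m Hm] /cb [n [cnx cnW]] H]].
    have ps : pref (mkseq a m) `<=` cyl a m.
      move=> b Hb l lm; rewrite Hb ?size_mkseq // nth_mkseq //.
    exists (Cantor.to_nat (pickle (mkseq a m), n)) => //.
    rewrite /P Cantor.cancel_of_to pickleK.
    case: pselect => [?|[]].
    * split => //= l; rewrite size_mkseq => lm; rewrite nth_mkseq //.
    * by move=> [b y] [/= /ps /Hm Qb /cnW Wy]; apply: H.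
  + case=> j _; rewrite /P; case: unpickle => [s|//].
    by case: pselect => // H /H.
- move=> j; rewrite /P; case: unpickle => [s|]; last exact: open0.
  case: pselect => ?; last exact: open0.
  apply: box_open; [exact: pref_open|exact: (cc _).1].
- move=> j; rewrite /P; case: unpickle => [s|]; last by rewrite setC0; exact: openT.
  case: pselect => ?; last by rewrite setC0; exact: openT.
  apply: box_openC; [exact: pref_openC|exact: (cc _).2].
Qed.
End Zero.

Lemma principal_of (X : topologicalType) k (T : kforest k) th (d : baire -> set X) :
  is_ktree T -> univ th d ->
  Sigma0 th (@set0 (baire * X)) -> Sigma0 th (@setT (baire * X)) ->
  (forall A B : set (baire * X), Sigma0 th A -> Sigma0 th B -> Sigma0 th (A `&` B)) ->
  (forall A : nat -> set (baire * X), (forall n, Sigma0 th (A n)) -> Sigma0 th (\bigcup_n A n)) ->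
  (forall A : nat -> set (baire * X), (forall n, Sigma0 th (A n)) ->
    exists A' : nat -> set (baire * X), [/\ forall n, Sigma0 th (A' n), forall n, A' n `<=` A n,
       forall n m x, A' n x -> A' m x -> n = m &
       \bigcup_n A' n = \bigcup_n A n]) ->
  exists nu : baire -> X -> 'I_k, principal_rep th T nu.
Proof.
move=> [r hr] ud S0 ST SI SU SRed.
case: (fnode_countable T) => idx idx_inj.
pose F p := [set z : baire * X | d (bproj (idx p) z.1) z.2].
have SF p : Sigma0 th (F p) by exact: joint_pre (idx p) (proj1 ud).
have [G [lab [SG GU Geq Gspec]]] := normalize hr S0 ST SI SU SRed idx_inj SF.
exists (fun b x => lab (b, x)).
have tot : total_rep th T (fun b x => lab (b, x)).
  split.
  - move=> b; exists (fun p => (fun x => (b, x)) @^-1` G p); split.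
    + move=> p; exact: S_pre (@cont_sec X b) (SG p).
    + apply/seteqP; split => // x _.
      have : (\bigcup_p G p) (b, x) by rewrite GU.
      by case=> p _ Gp; exists p.
    + move=> i; apply/seteqP; split => x /=;
        have /= E := f_equal (fun A => A (b, x)) (Geq i).
      * move=> Hi; have : (\bigcup_(p in [set p | flabel p = i])
           (G p `\` \bigcup_(q in [set q | flt q p]) G q)) (b, x) by rewrite -E.
        case=> p Lp [Gp nG]; exists p => //; split => //; case=> q qp Gq; apply: nG; by exists q.
      * case=> p Lp [Gp nG]; rewrite E; exists p => //; split => //; case=> q qp Gq; apply: nG; by exists q.
  - exists G; split => // i; rewrite -Geq; apply/seteqP; split => -[b x] //.
split => // mu [_ [C [SC CU Ceq]]].
have [gs0 Hgs0] := choice (fun p => proj2 ud _ (SC p)).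
pose gs n := match pselect (exists p, idx p = n) with
  | left h => gs0 (proj1_sig (cid h)) | right _ => fun a : baire => a end.
have gsE p : gs (idx p) = gs0 p.
  rewrite /gs; case: pselect => [h|[]]; last by exists p.
  by case: (cid h) => q /= /idx_inj ->.
have gsc n : continuous (gs n).
  rewrite /gs; case: pselect => [h|_].
  - by case: (Hgs0 (proj1_sig (cid h))).
  - by apply: cont_baire => a j; exists j.+1 => b H; apply: H.
exists (bcomb gs); split; first exact: bcomb_cont gsc.
apply: funext => a; apply: funext => x /=.
have FC p : F p (bcomb gs a, x) <-> C p (a, x).
  rewrite /F /= bcombK gsE; split; [exact: (proj2 (proj2 (Hgs0 p) a x))|exact: (proj1 (proj2 (Hgs0 p) a x))].
have [m [labm mr mnot]] := Gspec (bcomb gs a, x).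
rewrite labm.
have nC q : flt q m -> ~ C q (a, x) by move=> qm /FC; exact: mnot.
have Cm : C m (a, x).
  case: mr => [mr|/FC //].
  have : (\bigcup_p C p) (a, x) by rewrite CU.
  case=> p _ Cp; have [<-//|npm] := pselect (p = m).
  by case: (nC p) => //; split => //; rewrite mr; exact: hr.
have /= E := f_equal (fun A => A (a, x)) (Ceq (flabel m)).
have : (\bigcup_(p in [set p | flabel p = flabel m])
           (C p `\` \bigcup_(q in [set q | flt q p]) C q)) (a, x).
  by exists m => //; split => // -[q qm Cq]; exact: nC qm Cq.
by rewrite -E.
Qed.

Lemma S1E (Y : topologicalType) (A : set Y) : Sigma0 bone A <-> open A.
Proof.
split; [move=> SA; exact: S_inv1 SA (le'_refl _) (le'_refl _)|].
by move=> oA; apply: Sigma0_one => //; apply/beqP; split; exact: le'_refl.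
Qed.

Unset Implicit Arguments.
Set Strict Implicit.

Theorem proposition4p13 (k : nat) (X : topologicalType) (T : kforest k) :
  (2 <= k)%N -> @second_countable X -> kolmogorov_space X -> is_ktree T ->
  (forall theta : bord, ble btwo theta ->
     exists nu : baire -> X -> 'I_k, principal_rep theta T nu) /\
  (zero_dim X -> exists nu : baire -> X -> 'I_k, principal_rep bone T nu).
Proof.
move=> _ sc _ hT; split.
- move=> th /ble_le' th2.
  have [d ud] := univ_ex sc th2.
  apply: principal_of hT ud _ _ _ _ _.
  + exact: S_empty.
  + apply: S_setT; exact: le'_trans (I : le' bone btwo) th2.
  + move=> A B; exact: S_setI.
  + move=> A; exact: S_union.
  + exact: S_reduction th2.
- move=> zd.
  have [e [eo eb]] := enum_base sc.
  apply: principal_of hT (univ1 eo eb) _ _ _ _ _.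
  + exact: S_empty.
  + apply: S_setT; exact: le'_refl.
  + move=> A B; exact: S_setI.
  + move=> A; exact: S_union.
  + apply: reduction.
    * exact: S_empty.
    * apply: S_setT; exact: le'_refl.
    * move=> A B; exact: S_setI.
    * move=> A; exact: S_union.
    * move=> A /S1E oA; have [P [-> oP oPc]] := open_decomp sc zd oA.
      by exists P; split => // n; apply/S1E.
Qed.
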